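(* Let $L$, $\rho$, $\mathcal{H}$ and $\mathrm{ht}_\rho$ be as in the context. The open horoball $\{x\in\mathbb{C}H^{13}:\mathrm{ht}_\rho(x)<1\}$ is disjoint from $\mathcal{H}$, and the hyperplanes of $\mathcal{M}$ that meet its boundary $\{x:\mathrm{ht}_\rho(x)=1\}$ are exactly the orthogonal complements $l^\perp$ of the roots $l$ satisfying $|\langle\rho,l\rangle|^2=3$.
   Context: Let $\omega$ be a primitive cube root of unity, $\mathcal{E}=\mathbb{Z}[\omega]$, $\theta=\omega-\bar\omega=\sqrt{-3}$. Hermitian forms are linear in the first argument and antilinear in the second; $v^2=\langle v,v\rangle$. $\Lambda$ is the complex Leech lattice, an $\mathcal{E}$-lattice of rank 12 whose underlying real lattice is a scaled Leech lattice, scaled to have minimal norm $6$ (all inner products in $\theta\mathcal{E}$, $\Lambda=\theta\Lambda^*$). $L=\Lambda\oplus\mathcal{E}^2$, vectors $(x;y,z)$, with $\langle(x;y,z),(x';y',z')\rangle=\langle x,x'\rangle_\Lambda+\bar\theta y\bar z'+\theta z\bar y'$; signature $(13,1)$. $\mathbb{C}H^{13}$ is the set of negative-definite lines in $L\otimes_{\mathcal{E}}\mathbb{C}$. A root is a vector of $L$ of norm $3$; $\mathcal{M}$ is the set of hyperplanes $s^\perp\subseteq\mathbb{C}H^{13}$ for roots $s$, $\mathcal{H}$ their union. $\rho=(0;0,1)$, and for $x\in\mathbb{C}H^{13}$ represented by $w$, $\mathrm{ht}_\rho(x)=-|\langle\rho,w\rangle|^2/w^2$. *)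

(* Defs.v *)
From mathcomp Require Import all_boot all_order all_algebra.
From mathcomp Require Import complex Rstruct.
Set Implicit Arguments. Unset Strict Implicit. Unset Printing Implicit Defensive.
Import Order.TTheory GRing.Theory Num.Theory.
Local Open Scope ring_scope.

Notation C := (Rdefinitions.R[i]).

Definition omega : C := (-1 + sqrtC (-3)) / 2.
Definition theta : C := omega - omega^*.

Definition inE (z : C) : Prop := exists a b : int, z = a%:~R + b%:~R * omega.

(* The E-lattice Lambda of rank 12 is modelled as E^12 (coordinates w.r.t. an
   E-basis) inside Lambda (x)_E C = C^12, with Hermitian form given by the Gram
   matrix G: <u,v> = sum_ij u_i G_ij conj(v_j)  (linear in u, antilinear in v). *)
Definition formG (G : 'M[C]_12) (u v : 'rV[C]_12) : C :=
  \sum_(i < 12) \sum_(j < 12) u 0 i * G i j * (v 0 j)^*.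

Definition inLam (v : 'rV[C]_12) : Prop := forall i, inE (v 0 i).

Definition inDual (G : 'M[C]_12) (v : 'rV[C]_12) : Prop :=
  forall u, inLam u -> inE (formG G v u).

Definition complex_Leech (G : 'M[C]_12) : Prop :=
  [/\ forall i j, G j i = (G i j)^*,
      forall u : 'rV[C]_12, u != 0 -> 0 < formG G u u,
      forall u v, inLam u -> inLam v -> exists e, inE e /\ formG G u v = theta * e,
      forall v, inLam v <-> exists u, inDual G u /\ v = theta *: u
    & (forall v, inLam v -> v != 0 -> 6 <= formG G v v) /\
      (exists v, inLam v /\ formG G v v = 6)].

(* L = Lambda (+) E^2, vectors (x; y, z); L (x)_E C = C^12 x C x C. *)
Definition Lvec : Type := ('rV[C]_12 * C * C)%type.

Definition formL (G : 'M[C]_12) (a b : Lvec) : C :=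
  formG G a.1.1 b.1.1 + theta^* * a.1.2 * (b.2)^* + theta * a.2 * (b.1.2)^*.

Definition inL (a : Lvec) : Prop := [/\ inLam a.1.1, inE a.1.2 & inE a.2].

Definition is_root (G : 'M[C]_12) (s : Lvec) : Prop := inL s /\ formL G s s = 3.

Definition rho : Lvec := (0, 0, 1).

(* w represents a point of CH^13 (a negative-definite line) *)
Definition inCH (G : 'M[C]_12) (w : Lvec) : Prop := formL G w w < 0.

Definition ht (G : 'M[C]_12) (w : Lvec) : C :=
  - (`|formL G rho w| ^+ 2) / formL G w w.

Definition on_mirror (G : 'M[C]_12) (s w : Lvec) : Prop :=
  inCH G w /\ formL G w s = 0.

(* Main.v *)
Require Import Defs.
From mathcomp Require Import all_boot all_order all_algebra.
From mathcomp Require Import complex Rstruct ring zify.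
Import Order.TTheory GRing.Theory Num.Theory.
Local Open Scope ring_scope.

Lemma cc (z : C) : z^*^* = z. Proof. by rewrite conjCK. Qed.

Lemma formG_linl (G : 'M[C]_12) a b u v w :
  formG G (a *: u + b *: v) w = a * formG G u w + b * formG G v w.
Proof.
rewrite /formG !mulr_sumr -big_split /=; apply: eq_bigr => i _.
rewrite !mulr_sumr -big_split; apply: eq_bigr => j _.
rewrite !mxE /=; ring.
Qed.

Lemma formG_linr (G : 'M[C]_12) a b u v w :
  formG G w (a *: u + b *: v) = a^* * formG G w u + b^* * formG G w v.
Proof.
rewrite /formG !mulr_sumr -big_split /=; apply: eq_bigr => i _.
rewrite !mulr_sumr -big_split; apply: eq_bigr => j _.
rewrite !mxE /= rmorphD !rmorphM; ring.
Qed.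

Lemma formG_conj (G : 'M[C]_12) u v :
  (forall i j, G j i = (G i j)^*) -> (formG G u v)^* = formG G v u.
Proof.
move=> HG; rewrite /formG rmorph_sum exchange_big /=; apply: eq_bigr => j _.
rewrite rmorph_sum; apply: eq_bigr => i _.
rewrite !rmorphM /= -HG.
have ->: forall z : C, z^*^* = z by move=> z; rewrite conjCK.
ring.
Qed.

Lemma formG0 (G : 'M[C]_12) v : formG G 0 v = 0.
Proof. by rewrite /formG big1 // => i _; rewrite big1 // => j _; rewrite mxE !mul0r. Qed.

Definition lc (a : C) (u : Lvec) (b : C) (v : Lvec) : Lvec :=
  (a *: u.1.1 + b *: v.1.1, a * u.1.2 + b * v.1.2, a * u.2 + b * v.2).

Lemma formL_lcl G a u b v w :
  formL G (lc a u b v) w = a * formL G u w + b * formL G v w.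
Proof. rewrite /formL /lc /= formG_linl; ring. Qed.

Lemma formL_lcr G a u b v w :
  formL G w (lc a u b v) = a^* * formL G w u + b^* * formL G w v.
Proof. rewrite /formL /lc /=; generalize theta => t; rewrite formG_linr !rmorphD !rmorphM; ring. Qed.

Lemma formL_conj (G : 'M[C]_12) u v :
  (forall i j, G j i = (G i j)^*) -> (formL G u v)^* = formL G v u.
Proof.
move=> HG; rewrite /formL; generalize theta => t.
rewrite !rmorphD !rmorphM /= !cc formG_conj //; ring.

Qed.

Lemma sconj : (sqrtC (-3 : C))^* = - sqrtC (-3).
Proof.
set s := sqrtC (-3 : C).
have hs : s ^+ 2 = -3 by rewrite sqrtCK.
have hc : s^* ^+ 2 = -3 by rewrite -rmorphXn hs rmorphN rmorph_nat.
have : (s^* + s) * (s^* - s) == 0.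
  have -> : (s^* + s) * (s^* - s) = s^* ^+ 2 - s ^+ 2 by ring.
  by rewrite hc hs subrr.
rewrite mulf_eq0 => /orP [|]; first by rewrite addr_eq0 => /eqP.
rewrite subr_eq0 => /eqP hr.
have sr : s \is Num.real by apply/CrealP.
move: sr; rewrite realEsqr hs oppr_ge0 => h.
have h3 : (0:C) < 3 by rewrite ltr0n.
by have := lt_le_trans h3 h; rewrite ltxx.
Qed.
Lemma theta_s : theta = sqrtC (-3).
Proof.
rewrite /theta /omega rmorphM rmorphD rmorphN /= sconj fmorphV /= rmorph_nat rmorph1.
by field.

Qed.
Lemma thetaJ : theta^* = - theta.
Proof. by rewrite theta_s sconj. Qed.
Lemma theta_norm : theta * theta^* = 3.
Proof. rewrite thetaJ theta_s. have hs : sqrtC (-3 : C) ^+ 2 = -3 by rewrite sqrtCK.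
rewrite mulrN -expr2 hs opprK //. Qed.
Lemma omega_sum : omega + omega^* = -1.
Proof. rewrite /omega rmorphM rmorphD rmorphN /= sconj fmorphV /= rmorph_nat rmorph1. by field. Qed.
Lemma omega_prod : omega * omega^* = 1.
Proof. rewrite /omega rmorphM rmorphD rmorphN /= sconj fmorphV /= rmorph_nat rmorph1.
have hs : sqrtC (-3 : C) ^+ 2 = -3 by rewrite sqrtCK.
set s := sqrtC (-3 : C) in hs *.
have -> : (-1 + s) / 2 * ((-1 + - s) / 2) = (1 - s ^+ 2) / 4 by field.
rewrite hs. by field. Qed.

Lemma eis_norm (a : C) : Defs.inE a -> a != 0 -> 1 <= a * a^*.
Proof.
case=> [m [n ->]] hne.
rewrite rmorphD rmorphM !rmorph_int.
have -> : (m%:~R + n%:~R * omega) * (m%:~R + n%:~R * omega^*) =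
   m%:~R^+2 + m%:~R*n%:~R*(omega+omega^*) + n%:~R^+2*(omega*omega^*) :> C by ring.
rewrite omega_sum omega_prod.
have -> : (m%:~R ^+ 2 + m%:~R * n%:~R * -1 + n%:~R ^+ 2 * 1 : C) = (m^+2 - m*n + n^+2)%:~R.
  by rewrite intrD intrB intrM !rmorphXn /=; ring.
have -> : (1:C) = (1:int)%:~R by [].
rewrite ler_int.
have [/andP[/eqP m0 /eqP n0]|hmn] := boolP ((m == 0) && (n == 0)).
  by move: hne; rewrite m0 n0 mul0r addr0 eqxx.
move: hmn; rewrite negb_and => hmn.
rewrite !expr2.
have [n0|n0] := eqVneq n 0.
  rewrite n0 in hmn *; nia.
nia.
Qed.

Lemma formG_ge0 (G : 'M[C]_12) v :
  (forall u : 'rV[C]_12, u != 0 -> 0 < formG G u u) -> 0 <= formG G v v.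
Proof.
move=> Hp; have [->|nz] := eqVneq v 0; first by rewrite formG0.
exact: ltW (Hp _ nz).
Qed.

Lemma formL_rho G u : formL G rho u = theta * (u.1.2)^*.
Proof. by rewrite /formL /rho /= formG0 !(mulr0, mul0r, add0r, mulr1). Qed.

Lemma formL_rr G : formL G rho rho = 0.
Proof. by rewrite formL_rho /rho /= rmorph0 mulr0. Qed.

Lemma root_N G s :
  (forall v, inLam v -> v != 0 -> 6 <= formG G v v) ->
  is_root G s -> 3 <= `|formL G rho s| ^+ 2.
Proof.
move=> Hmin [[Hl Ha Hb] Hs3].
have a0 : s.1.2 != 0.
  apply/negP => /eqP a0; move: Hs3; rewrite /formL a0 rmorph0 !mulr0 mul0r !addr0.
  have [->|nz] := eqVneq s.1.1 0.
    by rewrite formG0 => /eqP; rewrite eq_sym pnatr_eq0.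
  move=> h; have := Hmin _ Hl nz; rewrite h ler_nat //.
rewrite formL_rho normrM exprMn norm_conjC normCK theta_norm normCK.
have := @eis_norm _ Ha a0.
move=> h; rewrite -{1}[3]mulr1; apply: ler_wpM2l => //; exact: ler0n.
Qed.

Lemma key (G : 'M[C]_12) w s :
  (forall i j, G j i = (G i j)^*) ->
  (forall u : 'rV[C]_12, u != 0 -> 0 < formG G u u) ->
  formL G w s = 0 -> formL G s s = 3 ->
  0 <= `|formL G rho s| ^+ 2 * formL G w w + 3 * `|formL G rho w| ^+ 2.
Proof.
move=> HG Hp Hws Hs3.
set v := lc (formL G rho s)^* w (- (formL G rho w)^*) s.
have v12 : v.1.2 = 0.
  rewrite /v /lc /= !formL_rho !rmorphM /= !cc; ring.
have Hsw : formL G s w = 0 by rewrite -formL_conj // Hws rmorph0.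
have E : formL G v v = `|formL G rho s| ^+ 2 * formL G w w + 3 * `|formL G rho w| ^+ 2.
  rewrite /v formL_lcl !formL_lcr Hws Hsw Hs3 !normCKC rmorphN /= !cc; ring.
rewrite -E /formL v12 rmorph0 !mulr0 mul0r !addr0.
exact: formG_ge0.
Qed.

Lemma num1 (W H N : C) : W < 0 -> 3 <= N -> 0 <= N * W + 3 * H -> - H / W < 1 -> False.
Proof.
move=> W0 N3 h ht.
have mW : 0 < - W by rewrite oppr_gt0.
have e : - H / W = H / (- W) by rewrite invrN mulrN mulNr.
move: ht; rewrite e ltr_pdivrMr // mul1r => hH.
have h2 : 0 <= (N - 3) * (- W) by apply: mulr_ge0; [rewrite subr_ge0|exact: ltW].
have e2 : N * W + 3 * H + (N - 3) * (- W) = 3 * (H + W) by ring.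
have h3 : 0 <= 3 * (H + W) by rewrite -e2; exact: addr_ge0.
have h4 : H + W < 0 by rewrite -(opprK W) subr_lt0.
have h5 : 3 * (H + W) < 0 by rewrite pmulr_rlt0 // ltr0n.
by have := le_lt_trans h3 h5; rewrite ltxx.
Qed.

Lemma num2 (W H N : C) : W < 0 -> 3 <= N -> 0 <= N * W + 3 * H -> - H / W = 1 -> N = 3.
Proof.
move=> W0 N3 h ht.
have Wn : W != 0 by rewrite lt_eqF.
have hH : H = - W by rewrite -(opprK H) -[- H](divfK Wn) ht mul1r.
move: h; rewrite hH.
have -> : N * W + 3 * - W = (N - 3) * W by ring.
rewrite nmulr_lge0 // subr_le0 => h.
by apply/le_anti; rewrite h N3.
Qed.

Theorem lemma4p1 (G : 'M[C]_12) :
  complex_Leech G ->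
  (forall w : Lvec, inCH G w -> ht G w < 1 ->
     forall s : Lvec, is_root G s -> ~ on_mirror G s w)
  /\
  (forall s : Lvec, is_root G s ->
     ((exists w : Lvec, on_mirror G s w /\ ht G w = 1) <->
      (exists l : Lvec, [/\ is_root G l, `|formL G rho l| ^+ 2 = 3 &
                            forall w : Lvec, on_mirror G s w <-> on_mirror G l w]))).
Proof.
move=> [HG Hp _ _ [Hmin _]]; split.
  move=> w Hw Hht s Hs [_ Hws].
  have := @key _ _ _ HG Hp Hws (proj2 Hs).
  move=> h; exact: (@num1 _ _ _ Hw (@root_N _ _ Hmin Hs) h Hht).
move=> s Hs; split.
  move=> [w [[Hw Hws] Hht]].
  have := @key _ _ _ HG Hp Hws (proj2 Hs).
  move/(@num2 _ _ _ Hw (@root_N _ _ Hmin Hs))/(_ Hht) => N3.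
  by exists s; split.
move=> [l [Hl Hn Hiff]].
set P := formL G rho l.
have PP : P^* * P = 3 by rewrite -normCKC.
have Plr : formL G l rho = P^* by rewrite /P formL_conj.
have c3 : (P / 3)^* = P^* / 3 by rewrite rmorphM fmorphV /= rmorph_nat.
set w := lc 1 rho (- (P / 3)) l.
have Hrw : formL G rho w = -1.
  rewrite /w formL_lcr formL_rr rmorph1 rmorphN /= c3 -/P.
  by rewrite mul1r add0r mulNr mulrAC PP; field.
have Hlw : formL G l w = 0.
  rewrite /w formL_lcr Plr rmorph1 rmorphN /= c3 (proj2 Hl) mul1r; by field.
have Hww : formL G w w = -1.
  by rewrite {1}/w formL_lcl Hrw Hlw mulr0 addr0 mul1r.
have Hwl : formL G w l = 0.
  rewrite /w formL_lcl (proj2 Hl) -/P mul1r; by field.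
exists w; split.
  apply/Hiff; split => //; rewrite /inCH Hww oppr_lt0 ltr01 //.
rewrite /ht Hrw Hww normrN normr1 expr1n; by field.
Qed.
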